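(* Let $(\mathcal V,\{C_n\}_n,e)$ be an operator system and let $p\in\mathcal V$ satisfy $0\le p\le e$. Then $\{C(p_n)\}_n$ is a (not necessarily proper) matrix ordering on $\mathcal V$, and $p$ is an Archimedean matrix order unit for $(\mathcal V,\{C(p_n)\}_n)$.
   Context: $e_n=I_n\otimes e$, $p_n=I_n\otimes p$, and $C(p_n)=\{x\in M_n(\mathcal V): x=x^*,\ \forall\epsilon>0\ \exists t>0 \text{ such that } x+\epsilon p_n+t(e_n-p_n)\in C_n\}$. A (not necessarily proper) matrix ordering is a sequence of cones $D_n\subseteq M_n(\mathcal V)_h$ with $\alpha^*D_n\alpha\subseteq D_m$ for all $\alpha\in M_{n,m}$. An element $u$ is an Archimedean matrix order unit for $\{D_n\}$ if for every hermitian $x\in M_n(\mathcal V)$ there is $r>0$ with $r u_n-x\in D_n$ (where $u_n=I_n\otimes u$), and $x+\epsilon u_n\in D_n$ for all $\epsilon>0$ implies $x\in D_n$. *)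

(* Defs.v *)
(* Scalars: the complex numbers R[i] over a real field R : realType
   (R[i] = complex R from mathcomp-real-closed; for R = the reals this is ℂ). *)
From mathcomp Require Import all_boot all_order all_algebra.
From mathcomp Require Import reals complex.
Set Implicit Arguments. Unset Strict Implicit. Unset Printing Implicit Defensive.
Import Order.TTheory GRing.Theory Num.Theory.
Local Open Scope ring_scope.
Local Open Scope complex_scope.

Section OpSys.
Variable R : realType.
Local Notation C := (R[i]).
Variable V : lmodType C.
Variable star : V -> V.

Definition is_involution : Prop :=
  involutive star /\
  (forall (a : C) (u v : V), star (a *: u + v) = conjc a *: star u + star v).

Definition mxstar (n : nat) (x : 'M[V]_(n)) : 'M[V]_(n) :=
  \matrix_(i < n, j < n) star (x j i).

Definition mx_hermitian (n : nat) (x : 'M[V]_(n)) : Prop := mxstar x = x.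

(* alpha^* x alpha for alpha in M_{n,m}(C), x in M_n(V) *)
Definition mx_congr (n m : nat) (alpha : 'M[C]_(n, m)) (x : 'M[V]_(n)) : 'M[V]_m :=
  \matrix_(k < m, l < m)
     \sum_(i < n) \sum_(j < n) (conjc (alpha i k) * alpha j l) *: x i j.

Definition ampl (n : nat) (v : V) : 'M[V]_(n) :=
  \matrix_(i < n, j < n) (if i == j then v else 0).

Definition mxscale (n : nat) (a : C) (x : 'M[V]_(n)) : 'M[V]_(n) :=
  \matrix_(i < n, j < n) (a *: x i j).

Definition is_cone_h (n : nat) (D : 'M[V]_(n) -> Prop) : Prop :=
  (forall x, D x -> mx_hermitian x) /\
  D 0 /\
  (forall x y, D x -> D y -> D (x + y)) /\
  (forall (t : R) x, 0 <= t -> D x -> D (mxscale (t%:C) x)).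

Definition matrix_ordering (D : forall n : nat, 'M[V]_(n) -> Prop) : Prop :=
  (forall n, is_cone_h (D n)) /\
  (forall (n m : nat) (alpha : 'M[C]_(n, m)) (x : 'M[V]_(n)),
      D n x -> D m (mx_congr alpha x)).

Definition proper_ordering (D : forall n : nat, 'M[V]_(n) -> Prop) : Prop :=
  forall n (x : 'M[V]_(n)), D n x -> D n (- x) -> x = 0.

Definition archimedean_unit (D : forall n : nat, 'M[V]_(n) -> Prop) (u : V) : Prop :=
  (forall n (x : 'M[V]_(n)), mx_hermitian x ->
      exists r : R, 0 < r /\ D n (mxscale (r%:C) (ampl n u) - x)) /\
  (forall n (x : 'M[V]_(n)),
      (forall eps : R, 0 < eps -> D n (x + mxscale (eps%:C) (ampl n u))) -> D n x).

Definition operator_system (Cn : forall n : nat, 'M[V]_(n) -> Prop) (e : V) : Prop :=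
  is_involution /\ matrix_ordering Cn /\ proper_ordering Cn /\ archimedean_unit Cn e.

Definition Cp (Cn : forall n : nat, 'M[V]_(n) -> Prop) (e p : V) (n : nat)
    (x : 'M[V]_(n)) : Prop :=
  mx_hermitian x /\
  forall eps : R, 0 < eps -> exists t : R, 0 < t /\
    Cn n (x + mxscale (eps%:C) (ampl n p) + mxscale (t%:C) (ampl n e - ampl n p)).

End OpSys.

(* Main.v *)
Require Import Defs.
From mathcomp Require Import all_boot all_order all_algebra.
From mathcomp Require Import reals complex.
From mathcomp Require Import ring.
Import Order.TTheory GRing.Theory Num.Theory.
Local Open Scope ring_scope.
Local Open Scope complex_scope.

Set Implicit Arguments. Unset Strict Implicit. Unset Printing Implicit Defensive.

Lemma star_add (R : realType) (V : lmodType R[i]) (star : V -> V) :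
  is_involution star -> forall u v, star (u + v) = star u + star v.
Proof. by move=> [_ H] u v; rewrite -[u in LHS]scale1r H rmorph1 scale1r. Qed.

Lemma star0 (R : realType) (V : lmodType R[i]) (star : V -> V) :
  is_involution star -> star 0 = 0.
Proof.
move=> H; have := star_add H 0 0; rewrite addr0.
by move/(congr1 (fun z => z - star 0)); rewrite addrK subrr.
Qed.

Lemma star_scale (R : realType) (V : lmodType R[i]) (star : V -> V) :
  is_involution star -> forall a u, star (a *: u) = conjc a *: star u.
Proof. by move=> H a u; have [_ H2] := H; rewrite -[a *: u]addr0 H2 star0 // addr0. Qed.

Lemma star_sum (R : realType) (V : lmodType R[i]) (star : V -> V) :
  is_involution star -> forall n (F : 'I_n -> V),
  star (\sum_(i < n) F i) = \sum_(i < n) star (F i).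
Proof. by move=> H n F; apply: (big_morph star (star_add H) (star0 H)). Qed.

Lemma star_opp (R : realType) (V : lmodType R[i]) (star : V -> V) :
  is_involution star -> forall u, star (- u) = - star u.
Proof. by move=> H u; rewrite -scaleN1r star_scale // rmorphN rmorph1 scaleN1r. Qed.

Lemma herm_add (R : realType) (V : lmodType R[i]) (star : V -> V) n (x y : 'M[V]_n) :
  is_involution star -> mx_hermitian star x -> mx_hermitian star y ->
  mx_hermitian star (x + y).
Proof.
move=> H hx hy; rewrite /mx_hermitian -{2}hx -{2}hy; apply/matrixP=> i j.
by rewrite !mxE star_add.
Qed.

Lemma herm_opp (R : realType) (V : lmodType R[i]) (star : V -> V) n (x : 'M[V]_n) :
  is_involution star -> mx_hermitian star x -> mx_hermitian star (- x).
Proof.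
move=> H hx; rewrite /mx_hermitian -{2}hx; apply/matrixP=> i j.
by rewrite !mxE star_opp.
Qed.

Lemma herm_scale (R : realType) (V : lmodType R[i]) (star : V -> V) n (x : 'M[V]_n) (t : R) :
  is_involution star -> mx_hermitian star x -> mx_hermitian star (mxscale t%:C x).
Proof.
move=> H hx; rewrite /mx_hermitian -{2}hx; apply/matrixP=> i j.
by rewrite !mxE star_scale // conjc_real.
Qed.

Lemma ampl_add (R : realType) (V : lmodType R[i]) n (u v : V) :
  ampl n (u + v) = ampl n u + ampl n v.
Proof. by apply/matrixP=> i j; rewrite !mxE; case: (i == j); rewrite ?addr0. Qed.

Lemma ampl_opp (R : realType) (V : lmodType R[i]) n (u : V) :
  ampl n (- u) = - ampl n u.
Proof. by apply/matrixP=> i j; rewrite !mxE; case: (i == j); rewrite ?oppr0. Qed.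

Lemma ampl_sub (R : realType) (V : lmodType R[i]) n (u v : V) :
  ampl n (u - v) = ampl n u - ampl n v.
Proof. by rewrite ampl_add ampl_opp. Qed.

Lemma mxscaleD (R : realType) (V : lmodType R[i]) n (a : R[i]) (x y : 'M[V]_n) :
  mxscale a (x + y) = mxscale a x + mxscale a y.
Proof. by apply/matrixP=> i j; rewrite !mxE scalerDr. Qed.

Lemma mxscaleDl (R : realType) (V : lmodType R[i]) n (a b : R[i]) (x : 'M[V]_n) :
  mxscale (a + b) x = mxscale a x + mxscale b x.
Proof. by apply/matrixP=> i j; rewrite !mxE scalerDl. Qed.

Lemma mxscaleN (R : realType) (V : lmodType R[i]) n (a : R[i]) (x : 'M[V]_n) :
  mxscale a (- x) = - mxscale a x.
Proof. by apply/matrixP=> i j; rewrite !mxE scalerN. Qed.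

Lemma mxscaleA (R : realType) (V : lmodType R[i]) n (a b : R[i]) (x : 'M[V]_n) :
  mxscale a (mxscale b x) = mxscale (a * b) x.
Proof. by apply/matrixP=> i j; rewrite !mxE scalerA. Qed.

Lemma mxscale1 (R : realType) (V : lmodType R[i]) n (x : 'M[V]_n) :
  mxscale 1 x = x.
Proof. by apply/matrixP=> i j; rewrite !mxE scale1r. Qed.

Lemma mxscale0 (R : realType) (V : lmodType R[i]) n (x : 'M[V]_n) :
  mxscale 0 x = 0.
Proof. by apply/matrixP=> i j; rewrite !mxE scale0r. Qed.

Lemma mxscalex0 (R : realType) (V : lmodType R[i]) n (a : R[i]) :
  mxscale a (0 : 'M[V]_n) = 0.
Proof. by apply/matrixP=> i j; rewrite !mxE scaler0. Qed.

Lemma congrD (R : realType) (V : lmodType R[i]) n m (al : 'M[R[i]]_(n, m)) (x y : 'M[V]_n) :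
  mx_congr al (x + y) = mx_congr al x + mx_congr al y.
Proof.
apply/matrixP=> k l; rewrite !mxE -big_split /=; apply: eq_bigr => i _.
by rewrite -big_split /=; apply: eq_bigr => j _; rewrite mxE scalerDr.
Qed.

Lemma congrZ (R : realType) (V : lmodType R[i]) n m (al : 'M[R[i]]_(n, m)) (c : R[i]) (x : 'M[V]_n) :
  mx_congr al (mxscale c x) = mxscale c (mx_congr al x).
Proof.
apply/matrixP=> k l; rewrite !mxE scaler_sumr; apply: eq_bigr => i _.
by rewrite scaler_sumr; apply: eq_bigr => j _; rewrite mxE !scalerA mulrC.
Qed.

Lemma cone0 (R : realType) (V : lmodType R[i]) (star : V -> V) Cn n :
  matrix_ordering star Cn -> Cn n 0.
Proof. by move=> [H _]; have [_ [? _]] := H n. Qed.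

Lemma coneD (R : realType) (V : lmodType R[i]) (star : V -> V) Cn n (x y : 'M[V]_n) :
  matrix_ordering star Cn -> Cn n x -> Cn n y -> Cn n (x + y).
Proof. by move=> [H _]; have [_ [_ [? _]]] := H n; auto. Qed.

Lemma coneZ (R : realType) (V : lmodType R[i]) (star : V -> V) Cn n (t : R) (x : 'M[V]_n) :
  matrix_ordering star Cn -> 0 <= t -> Cn n x -> Cn n (mxscale t%:C x).
Proof. by move=> [H _]; have [_ [_ [_ ?]]] := H n; auto. Qed.

Lemma cone_herm (R : realType) (V : lmodType R[i]) (star : V -> V) Cn n (x : 'M[V]_n) :
  matrix_ordering star Cn -> Cn n x -> mx_hermitian star x.
Proof. by move=> [H _]; have [? _] := H n; auto. Qed.

Lemma cone_congr (R : realType) (V : lmodType R[i]) (star : V -> V) Cn n m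
   (al : 'M[R[i]]_(n, m)) (x : 'M[V]_n) :
  matrix_ordering star Cn -> Cn n x -> Cn m (mx_congr al x).
Proof. by move=> [_ H]; auto. Qed.

Lemma cone_sum (R : realType) (V : lmodType R[i]) (star : V -> V) Cn n
   (I : Type) (r : seq I) (P : pred I) (F : I -> 'M[V]_n) :
  matrix_ordering star Cn -> (forall i, P i -> Cn n (F i)) ->
  Cn n (\sum_(i <- r | P i) F i).
Proof.
move=> MO HF; apply: (big_ind (Cn n)); [exact: cone0 MO| |exact: HF].
by move=> x y; apply: coneD MO.
Qed.

Lemma ampl_cone (R : realType) (V : lmodType R[i]) (star : V -> V) Cn n (q : V) :
  matrix_ordering star Cn -> Cn 1%N (ampl 1 q) -> Cn n (ampl n q).
Proof.
move=> MO Hq.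
have -> : ampl n q = \sum_(k < n) mx_congr (delta_mx 0 k : 'M[R[i]]_(1, n)) (ampl 1 q).
  apply/matrixP=> a b; rewrite summxE !mxE.
  under eq_bigr do rewrite !mxE !big_ord1 !mxE /=.
  rewrite (bigD1 a) //= big1 ?addr0 => [|k /negbTE]; last first.
    by rewrite eq_sym => ->; rewrite rmorph0 mul0r scale0r.
  rewrite eqxx rmorph1 mul1r; case: (a =P b) => [->|/eqP]; first by rewrite eqxx scale1r.
  by rewrite eq_sym => /negbTE ->; rewrite scale0r.
apply: (big_ind (Cn n)); [exact: cone0 MO|by move=> x y; apply: coneD MO|]. by move=> k _; apply: (cone_congr _ MO Hq).
Qed.

Lemma sum_ind (R : realType) m (F : 'I_m -> R[i]) (a : 'I_m) :
  \sum_(k < m) (a == k)%:R * F k = F a.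
Proof.
rewrite (bigD1 a) //= eqxx mul1r big1 ?addr0 // => k /negbTE.
by rewrite eq_sym => ->; rewrite mul0r.
Qed.

Lemma cjM (R : realType) (x y : R[i]) : conjc (x * y) = conjc x * conjc y.
Proof. exact: rmorphM. Qed.
Lemma cjB (R : realType) (x y : R[i]) : conjc (x - y) = conjc x - conjc y.
Proof. exact: rmorphB. Qed.
Lemma cjn (R : realType) (k : nat) : conjc (k%:R : R[i]) = k%:R.
Proof. exact: rmorph_nat. Qed.

Lemma lagrange (R : realType) m (g : 'I_m -> R[i]) (a b : 'I_m) :
  \sum_(k < m) \sum_(l < m)
     conjc (conjc (g l) * (a == k)%:R - conjc (g k) * (a == l)%:R) *
           (conjc (g l) * (b == k)%:R - conjc (g k) * (b == l)%:R)
  = 2 * ((a == b)%:R * \sum_(c < m) g c * conjc (g c)) - 2 * (conjc (g a) * g b).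
Proof.
have E : forall k l : 'I_m,
     conjc (conjc (g l) * (a == k)%:R - conjc (g k) * (a == l)%:R) *
           (conjc (g l) * (b == k)%:R - conjc (g k) * (b == l)%:R)
  = (a == k)%:R * ((b == k)%:R * (g l * conjc (g l)))
    - (a == k)%:R * ((b == l)%:R * (g l * conjc (g k)))
    - (a == l)%:R * ((b == k)%:R * (g k * conjc (g l)))
    + (a == l)%:R * ((b == l)%:R * (g k * conjc (g k))).
  move=> k l; rewrite cjB !cjM !conjcK !cjn; ring.
under eq_bigr do under eq_bigr do rewrite E.
under eq_bigr do rewrite big_split !sumrB /=.
rewrite big_split !sumrB /=.
have T1 : forall (f : 'I_m -> R[i]), \sum_(k < m) \sum_(l < m) (a == k)%:R * ((b == k)%:R * f l)
   = (a == b)%:R * \sum_l f l.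
  move=> f; under eq_bigr do rewrite -!mulr_sumr.
  by rewrite (sum_ind (fun k => (b == k)%:R * _)) eq_sym.
have T2 : forall (f : 'I_m -> 'I_m -> R[i]),
   \sum_(k < m) \sum_(l < m) (a == k)%:R * ((b == l)%:R * f k l) = f a b.
  move=> f; under eq_bigr do rewrite -!mulr_sumr sum_ind.
  by rewrite (sum_ind (fun k => f k b)).
rewrite T1 (T2 (fun k l => g l * conjc (g k))).
rewrite (exchange_big _ _ _ _ _ (fun k l => (a == l)%:R * ((b == k)%:R * (g k * conjc (g l))))).
rewrite (exchange_big _ _ _ _ _ (fun k l => (a == l)%:R * ((b == l)%:R * (g k * conjc (g k))))).
rewrite (T2 (fun l k => g k * conjc (g l))) T1 /=.
ring.
Qed.

Lemma ifq (R : realType) (V : lmodType R[i]) (c : bool) (q : V) :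
  (if c then q else 0) = (c%:R : R[i]) *: q.
Proof. by case: c; rewrite ?scale1r ?scale0r. Qed.

Definition wv (R : realType) n m (ga : 'M[R[i]]_(n, m)) (i : 'I_n) (k l : 'I_m) : 'M[R[i]]_(1, m) :=
  \row_c (conjc (ga i l) * (c == k)%:R - conjc (ga i k) * (c == l)%:R).

Lemma core_id (R : realType) (V : lmodType R[i]) n m (ga : 'M[R[i]]_(n, m)) (q : V) :
  \sum_(i < n) \sum_(k < m) \sum_(l < m) mx_congr (wv ga i k l) (ampl 1 q)
  = mxscale (2 * \sum_(i < n) \sum_(c < m) ga i c * conjc (ga i c)) (ampl m q)
    - mxscale 2 (mx_congr ga (ampl n q)).
Proof.
apply/matrixP=> a b; rewrite !mxE !summxE.
under eq_bigr do rewrite summxE; under eq_bigr do under eq_bigr do rewrite summxE.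
under eq_bigr do under eq_bigr do under eq_bigr do rewrite !mxE !big_ord1 !mxE eqxx.
under eq_bigr do under eq_bigr do rewrite -scaler_suml.
under eq_bigr do rewrite -scaler_suml.
rewrite -scaler_suml.
under eq_bigr do rewrite lagrange.
under [X in _ = _ - 2 *: X]eq_bigr do under eq_bigr do rewrite mxE ifq scalerA.
under [X in _ = _ - 2 *: X]eq_bigr do rewrite -scaler_suml.
rewrite -scaler_suml ifq !scalerA -scalerBl; congr (_ *: _).
under [X in _ = _ - 2 * X]eq_bigr do (under eq_bigr do rewrite mulrC; rewrite sum_ind).
rewrite sumrB -!mulr_sumr; ring.
Qed.

Lemma half_c (R : realType) : (2^-1 : R)%:C * 2 = 1.
Proof.
apply/eqP; rewrite eq_complex /=; simpc.
by rewrite andbT (_ : 1 + 1 = 2 :> R) // mulVf // pnatr_eq0.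
Qed.

Lemma RC_add (R : realType) (x y : R) : (x + y)%:C = x%:C + y%:C.
Proof. exact: rmorphD. Qed.

Lemma core_bound (R : realType) (V : lmodType R[i]) (star : V -> V) Cn (q : V) n m
   (ga : 'M[R[i]]_(n, m)) :
  matrix_ordering star Cn -> Cn 1%N (ampl 1 q) ->
  exists K : R, 0 < K /\ Cn m (mxscale K%:C (ampl m q) - mx_congr ga (ampl n q)).
Proof.
move=> MO Hq.
set S := \sum_(i < n) \sum_(c < m) ga i c * conjc (ga i c).
have S0 : 0 <= S by apply: sumr_ge0 => i _; apply: sumr_ge0 => c _; apply: mulcJ_ge0.
have SR : S = (complex.Re S)%:C.
  by rewrite [LHS]complexE (ger0_Im S0) mulr0 addr0.
have Re0 : 0 <= complex.Re S by rewrite -ler0c -SR.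
have H1 : Cn m (\sum_(i < n) \sum_(k < m) \sum_(l < m) mx_congr (wv ga i k l) (ampl 1 q)).
  apply: (big_ind (Cn m)); [exact: cone0 MO|by move=> x y; apply: coneD MO|move=> i _].
  apply: (big_ind (Cn m)); [exact: cone0 MO|by move=> x y; apply: coneD MO|move=> k _].
  apply: (big_ind (Cn m)); [exact: cone0 MO|by move=> x y; apply: coneD MO|move=> l _].
  exact: (cone_congr _ MO Hq).
rewrite core_id -/S in H1.
have h2 : 0 <= (2^-1 : R) by rewrite invr_ge0 ler0n.
have H2 := coneZ MO h2 H1.
rewrite mxscaleD mxscaleN !mxscaleA mulrA half_c mul1r mxscale1 in H2.
exists (complex.Re S + 1); split; first by rewrite ltr_pwDr ?ltr01.
rewrite RC_add -SR mxscaleDl mxscale1 addrAC.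
apply: (coneD MO H2); exact: (ampl_cone _ MO Hq).
Qed.

Lemma ac3 (M : zmodType) (a b c d f : M) : a + b + c + (d - b) + (f - c) = a + d + f.
Proof. by rewrite (addrAC (a + b) c (d - b)) (addrACA a b d (- b)) subrr addr0 -(addrA (a + d) c) (addrC c) subrK. Qed.

Lemma ac2 (M : zmodType) (x a b y a' b' : M) :
  (x + a + b) + (y + a' + b') = x + y + (a + a') + (b + b').
Proof. by rewrite addrACA (addrACA x). Qed.

Lemma ac4 (M : zmodType) (a x b c : M) : a - x + b + c = (a + c - x) + b.
Proof. by rewrite addrAC (addrAC a). Qed.

Lemma RC_mul (R : realType) (x y : R) : (x * y)%:C = x%:C * y%:C.
Proof. exact: rmorphM. Qed.

Theorem proposition4p7 (R : realType) (V : lmodType R[i]) (star : V -> V)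
    (Cn : forall n : nat, 'M[V]_(n) -> Prop) (e p : V) :
  operator_system star Cn e ->
  Cn 1%N (ampl 1 p) -> Cn 1%N (ampl 1 e - ampl 1 p) ->
  matrix_ordering star (Cp star Cn e p) /\ archimedean_unit star (Cp star Cn e p) p.
Proof.
move=> [Inv [MO [_ Arch]]] Hp Hep; rewrite -ampl_sub in Hep.
have HP : forall n, Cn n (ampl n p) by move=> n; exact: (ampl_cone _ MO Hp).
have HQ : forall n, Cn n (ampl n (e - p)) by move=> n; exact: (ampl_cone _ MO Hep).
have hP : forall n, mx_hermitian star (ampl n p) by move=> n; exact: (cone_herm MO (HP n)).
have h0 : forall n, mx_hermitian star (0 : 'M[V]_n).
  by move=> n; apply/matrixP=> i j; rewrite !mxE star0.
have cp0 : forall n, Cp star Cn e p (0 : 'M[V]_n).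
  move=> n; split => // eps eps0; exists 1; split => //.
  rewrite -ampl_sub add0r mxscale1; apply: (coneD MO _ (HQ n)).
  by apply: (coneZ MO _ (HP n)); apply: ltW.
split; first split.
- move=> n; split; first by move=> x [].
  split; first exact: cp0.
  split.
    move=> x y [hx Hx] [hy Hy]; split; first exact: herm_add.
    move=> eps eps0; rewrite -ampl_sub in Hx Hy * .
    have e2 : 0 < eps / 2 by rewrite divr_gt0.
    have [t1 [t10 H1]] := Hx _ e2; have [t2 [t20 H2]] := Hy _ e2.
    exists (t1 + t2); split; first by rewrite addr_gt0.
    rewrite {1}(splitr eps) !RC_add !mxscaleDl -ac2.
    exact: (coneD MO H1 H2).
  move=> t x ht [hx Hx]; case: (ler0P t) => [t0|tpos].
    have -> : t = 0 by apply/eqP; rewrite eq_le t0 ht.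
    by rewrite (_ : (0 : R)%:C = 0) // mxscale0.
  split; first exact: herm_scale.
  move=> eps eps0; rewrite -ampl_sub in Hx * .
  have et : 0 < eps / t by rewrite divr_gt0.
  have [s [s0 Hs]] := Hx _ et.
  exists (t * s); split; first by rewrite mulr_gt0.
  have := coneZ MO (ltW tpos) Hs.
  by rewrite !mxscaleD !mxscaleA -!RC_mul mulrCA divff ?mulr1 // gt_eqF.
- move=> n m al x [hx Hx]; split.
    have hij : forall i j, star (x i j) = x j i by move=> i j; rewrite -{2}hx mxE.
    apply/matrixP=> k l; rewrite !mxE star_sum //.
    under eq_bigr do rewrite star_sum //.
    rewrite exchange_big; apply: eq_bigr => i _; apply: eq_bigr => j _.
    by rewrite star_scale // hij cjM conjcK mulrC.
  move=> eps eps0; rewrite -ampl_sub in Hx; rewrite -ampl_sub.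
  have [Kp [Kp0 HKp]] := core_bound al MO Hp.
  have [Kq [Kq0 HKq]] := core_bound al MO Hep.
  have dl : 0 < eps / Kp by rewrite divr_gt0.
  have [s [s0 Hs]] := Hx _ dl.
  exists (s * Kq); split; first by rewrite mulr_gt0.
  have H1 := cone_congr al MO Hs.
  rewrite !congrD !congrZ in H1.
  have H2 := coneZ MO (ltW dl) HKp.
  have H3 := coneZ MO (ltW s0) HKq.
  rewrite mxscaleD mxscaleN mxscaleA -RC_mul divfK ?gt_eqF // in H2.
  rewrite mxscaleD mxscaleN mxscaleA -RC_mul in H3.
  rewrite -(ac3 _ (mxscale (eps / Kp)%:C (mx_congr al (ampl n p))) (mxscale s%:C (mx_congr al (ampl n (e - p))))).
  apply: (coneD MO); last exact: H3.
  by apply: (coneD MO).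
- split.
    move=> n x hx; have [s [s0 Hs]] := (proj1 Arch) n x hx.
    exists s; split => //; split.
      by apply: herm_add => //; [exact: herm_scale | exact: herm_opp].
    move=> eps eps0; exists s; split => //; rewrite -ampl_sub ac4.
    rewrite -mxscaleD -ampl_add (addrC p) subrK.
    by apply: (coneD MO Hs); apply: (coneZ MO (ltW eps0) (HP n)).
  move=> n x H.
  have [hx1 _] := H 1 ltr01.
  split.
    have -> : x = x + mxscale 1%:C (ampl n p) - mxscale 1%:C (ampl n p) by rewrite addrK.
    by apply: herm_add => //; apply: herm_opp => //; apply: herm_scale.
  move=> eps eps0.
  have e2 : 0 < eps / 2 by rewrite divr_gt0.
  have [_ Hc] := H _ e2.
  have [t [t0 Ht]] := Hc _ e2.
  exists t; split => //.
  by rewrite {1}(splitr eps) RC_add mxscaleDl addrA.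
Qed.
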